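(* Let $(\mathfrak g,[\cdot,\cdot],\alpha,\varepsilon,B)$ be a quadratic multiplicative color Hom-Lie algebra, $\rho$ a faithful representation of $\mathfrak g$ on $(M,\beta)$ with $\alpha^2=\mathrm{id}$ and $\beta^2=\mathrm{id}$, and assume that $\tilde\rho$, $\tilde\rho(x)(f)=-\varepsilon(x,f)\,f\circ\rho(x)$, is a representation of $\mathfrak g$ on $(M^*,\tilde\beta)$, $\tilde\beta(f)=f\circ\beta$. Let $\mathscr D:M\otimes M^*\to\mathfrak g$ be the even linear map with $B(x,\mathscr D(m\otimes f))=\langle\rho(\alpha(x))(m),f\rangle$ for all $x\in\mathfrak g$, where $\langle n,f\rangle=\varepsilon(n,f)f(n)$. Define on $M\otimes M^*$ the bracket $[m\otimes f,m'\otimes f']=\rho(\mathscr D(m\otimes f))(m')\otimes\tilde\beta(f')+\varepsilon(m+f,m')\,\beta(m')\otimes\tilde\rho(\mathscr D(m\otimes f))(f')$ and $\tau=\beta\otimes\tilde\beta$. Then $(M\otimes M^*,[\cdot,\cdot],\tau,\varepsilon)$ is a color Hom-Leibniz algebra, i.e. for all homogeneous $u,v,w\in M\otimes M^*$: $[\tau(u),[v,w]]=[[u,v],\tau(w)]+\varepsilon(u,v)[\tau(v),[u,w]]$.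
   Context: $\mathbb K$ is a field of characteristic zero and $\Gamma$ an abelian group. A bicharacter is a map $\varepsilon:\Gamma\times\Gamma\to\mathbb K\setminus\{0\}$ with $\varepsilon(a,b)\varepsilon(b,a)=1$, $\varepsilon(a,b+c)=\varepsilon(a,b)\varepsilon(a,c)$, $\varepsilon(a+b,c)=\varepsilon(a,c)\varepsilon(b,c)$; for homogeneous elements $\varepsilon(x,y)=\varepsilon(\deg x,\deg y)$. A color Hom-Lie algebra $(\mathfrak g,[\cdot,\cdot],\alpha,\varepsilon)$: $\Gamma$-graded space, even bilinear bracket, even linear $\alpha$, with $[x,y]=-\varepsilon(x,y)[y,x]$ and $\varepsilon(z,x)[\alpha(x),[y,z]]+\varepsilon(x,y)[\alpha(y),[z,x]]+\varepsilon(y,z)[\alpha(z),[x,y]]=0$; multiplicative means $\alpha([x,y])=[\alpha(x),\alpha(y)]$; quadratic means equipped with a nondegenerate $\varepsilon$-symmetric invariant ($B([x,y],z)=B(x,[y,z])$) bilinear form $B$ with $B(\alpha(x),y)=B(x,\alpha(y))$. A representation of a multiplicative $\mathfrak g$ on $(M,\beta)$ is an even linear $\rho:\mathfrak g\to\mathfrak{gl}(M)$ with $\rho([x,y])\circ\beta=\rho(\alpha(x))\circ\rho(y)-\varepsilon(x,y)\rho(\alpha(y))\circ\rho(x)$ and $\beta\circ\rho(x)=\rho(\alpha(x))\circ\beta$; faithful means $\rho$ injective. $M^*$ is the graded dual; $M\otimes M^*$ is graded by total degree. *)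

(* Defs.v *)
From HB Require Import structures.
From mathcomp Require Import all_boot all_order all_algebra.
Set Implicit Arguments. Unset Strict Implicit. Unset Printing Implicit Defensive.
Import Order.TTheory GRing.Theory Num.Theory.
Local Open Scope ring_scope.

(* Conventions.
   - A Gamma-graded K-space is an lmodType V with a family of predicates
     D : Gamma -> V -> Prop (D a x means "x is homogeneous of degree a")
     such that V is the direct sum of the subspaces D a.
   - The graded dual M^* is realized inside the functions M -> K:
     a functional f is homogeneous of degree b (f in (M^* )_b = (M_{-b})^* )
     iff it is linear and vanishes on every M_c with c + b <> 0;
     M^* consists of finite sums of such functionals.
   - M (x) M^* is any K-space T with a map tens satisfying the universal
     property of the tensor product of M and M^*. *)

Section Defs.
Variables (K : fieldType) (G : zmodType).

Definition bicharacter (eps : G -> G -> K) : Prop :=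
  (forall a b, eps a b != 0) /\
  (forall a b, eps a b * eps b a = 1) /\
  (forall a b c, eps a (b + c) = eps a b * eps a c) /\
  (forall a b c, eps (a + b) c = eps a c * eps b c).

Definition lin (U V : lmodType K) (f : U -> V) : Prop :=
  forall (c : K) (u v : U), f (c *: u + v) = c *: f u + f v.

Definition bilin (U V W : lmodType K) (f : U -> V -> W) : Prop :=
  (forall u, lin (f u)) /\ (forall v, lin (fun u => f u v)).

Definition lin_form (U : lmodType K) (f : U -> K) : Prop :=
  forall (c : K) (u v : U), f (c *: u + v) = c * f u + f v.

Definition subspace (V : lmodType K) (P : V -> Prop) : Prop :=
  P 0 /\ (forall (c : K) u v, P u -> P v -> P (c *: u + v)).

Definition graded (V : lmodType K) (D : G -> V -> Prop) : Prop :=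
  (forall a, subspace (D a)) /\
  (forall v : V, exists n (a : 'I_n -> G) (w : 'I_n -> V),
      (forall i, D (a i) (w i)) /\ v = \sum_(i < n) w i) /\
  (forall n (a : 'I_n -> G) (w : 'I_n -> V), injective a ->
      (forall i, D (a i) (w i)) -> \sum_(i < n) w i = 0 -> forall i, w i = 0).

Definition even_map (V W : lmodType K) (DV : G -> V -> Prop) (DW : G -> W -> Prop)
  (f : V -> W) : Prop := forall a v, DV a v -> DW a (f v).

Definition color_hom_lie (g : lmodType K) (Dg : G -> g -> Prop)
  (br : g -> g -> g) (al : g -> g) (eps : G -> G -> K) : Prop :=
  graded Dg /\ bicharacter eps /\ bilin br /\ lin al /\ even_map Dg Dg al /\
  (forall a b x y, Dg a x -> Dg b y -> Dg (a + b) (br x y)) /\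
  (forall a b x y, Dg a x -> Dg b y -> br x y = - (eps a b *: br y x)) /\
  (forall a b c x y z, Dg a x -> Dg b y -> Dg c z ->
      eps c a *: br (al x) (br y z) + eps a b *: br (al y) (br z x)
      + eps b c *: br (al z) (br x y) = 0).

Definition hom_multiplicative (g : lmodType K) (br : g -> g -> g) (al : g -> g) : Prop :=
  forall x y, al (br x y) = br (al x) (al y).

Definition quadratic_form (g : lmodType K) (Dg : G -> g -> Prop)
  (br : g -> g -> g) (al : g -> g) (eps : G -> G -> K) (B : g -> g -> K) : Prop :=
  (forall x, lin_form (B x)) /\ (forall y, lin_form (fun x => B x y)) /\
  (forall x, (forall y, B x y = 0) -> x = 0) /\
  (forall a b x y, Dg a x -> Dg b y -> B x y = eps a b * B y x) /\
  (forall x y z, B (br x y) z = B x (br y z)) /\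
  (forall x y, B (al x) y = B x (al y)).

Definition representation (g : lmodType K) (Dg : G -> g -> Prop)
  (br : g -> g -> g) (al : g -> g) (eps : G -> G -> K)
  (M : lmodType K) (DM : G -> M -> Prop) (rho : g -> M -> M) (be : M -> M) : Prop :=
  graded DM /\ lin be /\ even_map DM DM be /\
  (forall x, lin (rho x)) /\
  (forall (c : K) x y m, rho (c *: x + y) m = c *: rho x m + rho y m) /\
  (forall a b x m, Dg a x -> DM b m -> DM (a + b) (rho x m)) /\
  (forall a b x y m, Dg a x -> Dg b y ->
      rho (br x y) (be m) = rho (al x) (rho y m) - eps a b *: rho (al y) (rho x m)) /\
  (forall x m, be (rho x m) = rho (al x) (be m)).

Definition dual_hom (M : lmodType K) (DM : G -> M -> Prop) (b : G) (f : M -> K) : Prop :=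
  lin_form f /\ (forall c m, DM c m -> c + b != 0 -> f m = 0).

Definition gdual (M : lmodType K) (DM : G -> M -> Prop) (f : M -> K) : Prop :=
  exists n (b : 'I_n -> G) (h : 'I_n -> M -> K),
    (forall i, dual_hom DM (b i) (h i)) /\ (forall m, f m = \sum_(i < n) h i m).

(* dual action: rho~(x)(f) = - eps(x, f) f o rho(x), for x of degree a, f of degree b *)
Definition rhot (g M : lmodType K) (eps : G -> G -> K) (rho : g -> M -> M)
  (a b : G) (x : g) (f : M -> K) : M -> K :=
  fun n => - (eps a b * f (rho x n)).

Definition dual_representation (g : lmodType K) (Dg : G -> g -> Prop)
  (br : g -> g -> g) (al : g -> g) (eps : G -> G -> K)
  (M : lmodType K) (DM : G -> M -> Prop) (rho : g -> M -> M) (be : M -> M) : Prop :=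
  (forall a b c x y f, Dg a x -> Dg b y -> dual_hom DM c f -> forall n,
      rhot eps rho (a + b) c (br x y) (f \o be) n =
      rhot eps rho a (b + c) (al x) (rhot eps rho b c y f) n
      - eps a b * rhot eps rho b (a + c) (al y) (rhot eps rho a c x f) n) /\
  (forall a c x f, Dg a x -> dual_hom DM c f -> forall n,
      rhot eps rho a c x f (be n) = rhot eps rho a c (al x) (f \o be) n).

Definition bilin_dual (M W : lmodType K) (DM : G -> M -> Prop)
  (phi : M -> (M -> K) -> W) : Prop :=
  (forall (c : K) m m' f, gdual DM f -> phi (c *: m + m') f = c *: phi m f + phi m' f) /\
  (forall (c : K) m f f', gdual DM f -> gdual DM f' ->
      phi m (fun n => c * f n + f' n) = c *: phi m f + phi m f').

Definition is_tensor (M : lmodType K) (DM : G -> M -> Prop)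
  (T : lmodType K) (tens : M -> (M -> K) -> T) : Prop :=
  bilin_dual DM tens /\
  (forall t : T, exists n (m : 'I_n -> M) (f : 'I_n -> M -> K),
      (forall i, gdual DM (f i)) /\ t = \sum_(i < n) tens (m i) (f i)) /\
  (forall (W : lmodType K) (phi : M -> (M -> K) -> W), bilin_dual DM phi ->
      exists psi : T -> W, lin psi /\
        forall m f, gdual DM f -> psi (tens m f) = phi m f).

Definition tdeg (M : lmodType K) (DM : G -> M -> Prop)
  (T : lmodType K) (tens : M -> (M -> K) -> T) (c : G) (t : T) : Prop :=
  exists n (a b : 'I_n -> G) (m : 'I_n -> M) (f : 'I_n -> M -> K),
    (forall i, DM (a i) (m i) /\ dual_hom DM (b i) (f i) /\ a i + b i = c) /\
    t = \sum_(i < n) tens (m i) (f i).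

End Defs.

(* Main.v *)
Require Import Defs.
From HB Require Import structures.
From mathcomp Require Import all_boot all_order all_algebra.
Import GRing.Theory.
Local Open Scope ring_scope.
From mathcomp Require Import ring.
From Stdlib Require Import FunctionalExtensionality.
Set Implicit Arguments. Unset Strict Implicit.

Section LC.
Variables (K : fieldType) (V : lmodType K) (X1 X2 X3 X4 X5 X6 : V).
Definition lc (k1 k2 k3 k4 k5 k6 : K) :=
  k1*:X1 + (k2*:X2 + (k3*:X3 + (k4*:X4 + (k5*:X5 + k6*:X6)))).
Lemma lcD k1 k2 k3 k4 k5 k6 l1 l2 l3 l4 l5 l6 :
  lc k1 k2 k3 k4 k5 k6 + lc l1 l2 l3 l4 l5 l6 =
  lc (k1+l1) (k2+l2) (k3+l3) (k4+l4) (k5+l5) (k6+l6).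
Proof. rewrite /lc !scalerDl; do ?(rewrite addrACA; congr (_ + _)). Qed.
Lemma lcZ c k1 k2 k3 k4 k5 k6 :
  c *: lc k1 k2 k3 k4 k5 k6 = lc (c*k1) (c*k2) (c*k3) (c*k4) (c*k5) (c*k6).
Proof. by rewrite /lc !scalerDr !scalerA. Qed.
Lemma lcN k1 k2 k3 k4 k5 k6 :
  - lc k1 k2 k3 k4 k5 k6 = lc (-k1) (-k2) (-k3) (-k4) (-k5) (-k6).
Proof. by rewrite /lc !opprD -!scaleNr. Qed.
Lemma lcB k1 k2 k3 k4 k5 k6 l1 l2 l3 l4 l5 l6 :
  lc k1 k2 k3 k4 k5 k6 - lc l1 l2 l3 l4 l5 l6 =
  lc (k1-l1) (k2-l2) (k3-l3) (k4-l4) (k5-l5) (k6-l6).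
Proof. by rewrite lcN lcD. Qed.
Lemma lc1 : X1 = lc 1 0 0 0 0 0.
Proof. by rewrite /lc !scale0r ?addr0 ?add0r scale1r. Qed.
Lemma lc2 : X2 = lc 0 1 0 0 0 0.
Proof. by rewrite /lc !scale0r ?addr0 ?add0r scale1r. Qed.
Lemma lc3 : X3 = lc 0 0 1 0 0 0.
Proof. by rewrite /lc !scale0r ?addr0 ?add0r scale1r. Qed.
Lemma lc4 : X4 = lc 0 0 0 1 0 0.
Proof. by rewrite /lc !scale0r ?addr0 ?add0r scale1r. Qed.
Lemma lc5 : X5 = lc 0 0 0 0 1 0.
Proof. by rewrite /lc !scale0r ?addr0 ?add0r scale1r. Qed.
Lemma lc6 : X6 = lc 0 0 0 0 0 1.
Proof. by rewrite /lc !scale0r ?addr0 ?add0r scale1r. Qed.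
End LC.

Lemma combine (K : fieldType) (V : lmodType K) (X1 X2 X3 X4 X5 X6 : V)
  (eAB eBA eAa eBa eABa eABa' eBAa : K) :
  eAB * eBA = 1 -> eABa = eAa * eBa -> eABa' = eAB * eAa -> eBAa = eBA * eBa ->
  (X1 + eABa' *: X2) + eBa *: (X3 + eAa *: X4) =
  ((X1 - eAB *: X5) + eABa *: (X4 - eAB *: X6)) +
  eAB *: ((X5 + eBAa *: X3) + eAa *: (X2 + eBa *: X6)).
Proof.
move=> h1 -> -> ->.
pose L := lc X1 X2 X3 X4 X5 X6.
have e1 : X1 = L 1 0 0 0 0 0 by exact: lc1.
have e2 : X2 = L 0 1 0 0 0 0 by exact: lc2.
have e3 : X3 = L 0 0 1 0 0 0 by exact: lc3.
have e4 : X4 = L 0 0 0 1 0 0 by exact: lc4.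
have e5 : X5 = L 0 0 0 0 1 0 by exact: lc5.
have e6 : X6 = L 0 0 0 0 0 1 by exact: lc6.
have LD : forall k1 k2 k3 k4 k5 k6 l1 l2 l3 l4 l5 l6,
  L k1 k2 k3 k4 k5 k6 + L l1 l2 l3 l4 l5 l6 =
  L (k1+l1) (k2+l2) (k3+l3) (k4+l4) (k5+l5) (k6+l6) by move=> *; exact: lcD.
have LB : forall k1 k2 k3 k4 k5 k6 l1 l2 l3 l4 l5 l6,
  L k1 k2 k3 k4 k5 k6 - L l1 l2 l3 l4 l5 l6 =
  L (k1-l1) (k2-l2) (k3-l3) (k4-l4) (k5-l5) (k6-l6) by move=> *; exact: lcB.
have LZ : forall c k1 k2 k3 k4 k5 k6,
  c *: L k1 k2 k3 k4 k5 k6 = L (c*k1) (c*k2) (c*k3) (c*k4) (c*k5) (c*k6)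
  by move=> *; exact: lcZ.
rewrite e1 e2 e3 e4 e5 e6 !LZ !LB !LD !LZ !LD !LZ !LD.
congr (L _ _ _ _ _ _); rewrite ?mulr0 ?addr0 ?mulrDr ?mulrA ?h1; ring.
Qed.

Section Gen.
Variable K : fieldType.

Lemma combine2 (V : lmodType K) (a1 a2 b1 b2 : V) (e eZ : K) :
  (a1 + e *: a2) + eZ *: (e *: b2 + b1) = (a1 + eZ *: b1) + e *: (a2 + eZ *: b2).
Proof.
pose L := lc a1 a2 b1 b2 0 0.
have e1 : a1 = L 1 0 0 0 0 0 by exact: lc1.
have e2 : a2 = L 0 1 0 0 0 0 by exact: lc2.
have e3 : b1 = L 0 0 1 0 0 0 by exact: lc3.
have e4 : b2 = L 0 0 0 1 0 0 by exact: lc4.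
have LD : forall k1 k2 k3 k4 k5 k6 l1 l2 l3 l4 l5 l6,
  L k1 k2 k3 k4 k5 k6 + L l1 l2 l3 l4 l5 l6 =
  L (k1+l1) (k2+l2) (k3+l3) (k4+l4) (k5+l5) (k6+l6) by move=> *; exact: lcD.
have LZ : forall c k1 k2 k3 k4 k5 k6,
  c *: L k1 k2 k3 k4 k5 k6 = L (c*k1) (c*k2) (c*k3) (c*k4) (c*k5) (c*k6)
  by move=> *; exact: lcZ.
rewrite e1 e2 e3 e4 !LZ !LD !LZ !LD.
congr (L _ _ _ _ _ _); ring.
Qed.

Lemma lin0 (U V : lmodType K) (f : U -> V) : lin f -> f 0 = 0.
Proof.
move=> H; have := H 1 0 0; rewrite !scale1r addr0 => h.
by apply: (addrI (f 0)); rewrite addr0 -h.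
Qed.
Lemma linD (U V : lmodType K) (f : U -> V) u v : lin f -> f (u + v) = f u + f v.
Proof. by move=> H; have := H 1 u v; rewrite !scale1r. Qed.
Lemma linZ (U V : lmodType K) (f : U -> V) c u : lin f -> f (c *: u) = c *: f u.
Proof. by move=> H; have := H c u 0; rewrite !addr0 (lin0 H) addr0. Qed.
Lemma linB (U V : lmodType K) (f : U -> V) u v : lin f -> f (u - v) = f u - f v.
Proof.
by move=> H; have := H (-1) v u; rewrite !scaleN1r addrC => ->; rewrite addrC.
Qed.
Lemma linS (U V : lmodType K) (f : U -> V) n (F : 'I_n -> U) : lin f ->
  f (\sum_(i < n) F i) = \sum_(i < n) f (F i).
Proof.
move=> H; elim: n F => [|n IH] F; first by rewrite !big_ord0 (lin0 H).
by rewrite !big_ord_recr /= linD // IH.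
Qed.

Lemma lf0 (U : lmodType K) (f : U -> K) : lin_form f -> f 0 = 0.
Proof.
move=> H; have := H 1 0 0; rewrite !scale1r addr0 mul1r => h.
by apply: (addrI (f 0)); rewrite addr0 -h.
Qed.
Lemma lfD (U : lmodType K) (f : U -> K) u v : lin_form f -> f (u + v) = f u + f v.
Proof. by move=> H; have := H 1 u v; rewrite !scale1r mul1r. Qed.
Lemma lfZ (U : lmodType K) (f : U -> K) c u : lin_form f -> f (c *: u) = c * f u.
Proof. by move=> H; have := H c u 0; rewrite !addr0 (lf0 H) addr0. Qed.
Lemma lfB (U : lmodType K) (f : U -> K) u v : lin_form f -> f (u - v) = f u - f v.
Proof.
by move=> H; have := H (-1) v u; rewrite !scaleN1r addrC => ->; rewrite mulN1r addrC.
Qed.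
Lemma lfS (U : lmodType K) (f : U -> K) n (F : 'I_n -> U) : lin_form f ->
  f (\sum_(i < n) F i) = \sum_(i < n) f (F i).
Proof.
move=> H; elim: n F => [|n IH] F; first by rewrite !big_ord0 (lf0 H).
by rewrite !big_ord_recr /= lfD // IH.
Qed.

Lemma subD (V : lmodType K) (P : V -> Prop) u v : subspace P -> P u -> P v -> P (u + v).
Proof. by move=> [_ H] pu pv; have := H 1 u v pu pv; rewrite scale1r. Qed.
Lemma subZ (V : lmodType K) (P : V -> Prop) c u : subspace P -> P u -> P (c *: u).
Proof. by move=> [P0 H] pu; have := H c u 0 pu P0; rewrite addr0. Qed.
Lemma subB (V : lmodType K) (P : V -> Prop) u v : subspace P -> P u -> P v -> P (u - v).
Proof. by move=> [_ H] pu pv; have := H (-1) v u pv pu; rewrite scaleN1r addrC. Qed.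

Lemma addS0 (V : zmodType) (f : V -> V) n (F : 'I_n -> V) :
  f 0 = 0 -> (forall x y, f (x + y) = f x + f y) -> (forall i, f (F i) = 0) ->
  f (\sum_(i < n) F i) = 0.
Proof.
move=> h0 hD hF; elim: n F hF => [|n IH] F hF; first by rewrite big_ord0.
by rewrite big_ord_recr /= hD IH ?hF ?addr0.
Qed.

Lemma E_add (V : zmodType) (p1 p2 q1 q2 r1 r2 : V) :
  (p1+p2) - ((q1+q2) + (r1+r2)) = (p1 - (q1+r1)) + (p2 - (q2+r2)).
Proof.
by rewrite [RHS]addrACA -opprD [(q1 + r1) + _]addrACA.
Qed.
End Gen.

Section Main.
Variables (K : fieldType) (G : zmodType)
  (g : lmodType K) (Dg : G -> g -> Prop) (br : g -> g -> g) (al : g -> g)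
  (eps : G -> G -> K) (B : g -> g -> K)
  (M : lmodType K) (DM : G -> M -> Prop) (rho : g -> M -> M) (be : M -> M)
  (T : lmodType K) (tens : M -> (M -> K) -> T)
  (Dmap : T -> g) (brT : T -> T -> T) (tau : T -> T).

Hypothesis HDsub : forall a, subspace (Dg a).
Hypothesis HDdec : forall v : g, exists n (a : 'I_n -> G) (w : 'I_n -> g),
      (forall i, Dg (a i) (w i)) /\ v = \sum_(i < n) w i.
Hypothesis Hne0 : forall a b, eps a b != 0.
Hypothesis Hinv : forall a b, eps a b * eps b a = 1.
Hypothesis Haddr : forall a b c, eps a (b + c) = eps a b * eps a c.
Hypothesis Haddl : forall a b c, eps (a + b) c = eps a c * eps b c.
Hypothesis Hal_ev : even_map Dg Dg al.
Hypothesis Hbr_deg : forall a b x y, Dg a x -> Dg b y -> Dg (a + b) (br x y).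
Hypothesis Hmul : hom_multiplicative br al.
Hypothesis HBl : forall x, lin_form (B x).
Hypothesis Hnd : forall x, (forall y, B x y = 0) -> x = 0.
Hypothesis Hsym : forall a b x y, Dg a x -> Dg b y -> B x y = eps a b * B y x.
Hypothesis Hinvar : forall x y z, B (br x y) z = B x (br y z).
Hypothesis HBal : forall x y, B (al x) y = B x (al y).
Hypothesis Hbelin : lin be.
Hypothesis Hbe_ev : even_map DM DM be.
Hypothesis Hrholin : forall x, lin (rho x).
Hypothesis Hrhox : forall (c : K) x y m, rho (c *: x + y) m = c *: rho x m + rho y m.
Hypothesis Hrhodeg : forall a b x m, Dg a x -> DM b m -> DM (a + b) (rho x m).
Hypothesis Hrep : forall a b x y m, Dg a x -> Dg b y ->
      rho (br x y) (be m) = rho (al x) (rho y m) - eps a b *: rho (al y) (rho x m).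
Hypothesis Hbecomm : forall x m, be (rho x m) = rho (al x) (be m).
Hypothesis Hal2 : forall x, al (al x) = x.
Hypothesis Hbe2 : forall m, be (be m) = m.
Hypothesis Hd1 : forall a b c x y f, Dg a x -> Dg b y -> dual_hom DM c f -> forall n,
      rhot eps rho (a + b) c (br x y) (f \o be) n =
      rhot eps rho a (b + c) (al x) (rhot eps rho b c y f) n
      - eps a b * rhot eps rho b (a + c) (al y) (rhot eps rho a c x f) n.
Hypothesis Hd2 : forall a c x f, Dg a x -> dual_hom DM c f -> forall n,
      rhot eps rho a c x f (be n) = rhot eps rho a c (al x) (f \o be) n.
Hypothesis Ht1 : forall (c : K) m m' f, gdual DM f -> tens (c *: m + m') f = c *: tens m f + tens m' f.
Hypothesis Ht2 : forall (c : K) m f f', gdual DM f -> gdual DM f' ->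
      tens m (fun n => c * f n + f' n) = c *: tens m f + tens m f'.
Hypothesis HDlin : lin Dmap.
Hypothesis HDdeg : forall c t, tdeg DM tens c t -> Dg c (Dmap t).
Hypothesis HDB : forall a c d x m f, Dg a x -> DM c m -> dual_hom DM d f ->
      B x (Dmap (tens m f)) = eps (a + c) d * f (rho (al x) m).
Hypothesis Htaulin : lin tau.
Hypothesis Htau : forall m f, gdual DM f -> tau (tens m f) = tens (be m) (f \o be).
Hypothesis HbrT1 : forall u, lin (brT u).
Hypothesis HbrT2 : forall v, lin (fun u => brT u v).
Hypothesis HbrT : forall a b c d m f m' f', DM a m -> dual_hom DM b f -> DM c m' -> dual_hom DM d f' ->
      brT (tens m f) (tens m' f') =
        tens (rho (Dmap (tens m f)) m') (f' \o be)
        + eps (a + b) c *: tens (be m') (rhot eps rho (a + b) d (Dmap (tens m f)) f').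

Lemma dh_gd b f : dual_hom DM b f -> gdual DM f.
Proof.
move=> h; exists 1%N, (fun _ => b), (fun _ => f); split => // m.
by rewrite big_ord1.
Qed.

Lemma dh_be b f : dual_hom DM b f -> dual_hom DM b (f \o be).
Proof.
move=> [hl hv]; split.
  by move=> c u v /=; rewrite Hbelin hl.
by move=> c m hm hc /=; apply: (hv c) => //; apply: Hbe_ev.
Qed.

Lemma dh_rhot a d x f : Dg a x -> dual_hom DM d f -> dual_hom DM (a + d) (rhot eps rho a d x f).
Proof.
move=> hx [hl hv]; split.
  move=> c u v; rewrite /rhot (Hrholin x) hl; ring.
move=> c m hm hc; rewrite /rhot (hv (a + c)); first by rewrite mulr0 oppr0.
  exact: Hrhodeg.
by rewrite -addrA addrCA.
Qed.

Lemma tens_lin f : gdual DM f -> lin (fun m => tens m f).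
Proof. by move=> h c m m'; apply: Ht1. Qed.

Lemma tensB2 m f f' c : gdual DM f -> gdual DM f' ->
  tens m (fun n => f n - c * f' n) = tens m f - c *: tens m f'.
Proof.
move=> h h'; have -> : (fun n => f n - c * f' n) = (fun n => (- c) * f' n + f n).
  by apply: functional_extensionality => n; rewrite addrC mulNr.
by rewrite Ht2 // scaleNr addrC.
Qed.

Lemma Dpure a b S m f : DM a m -> dual_hom DM b f -> a + b = S -> Dg S (Dmap (tens m f)).
Proof.
move=> hm hf <-; apply: HDdeg.
exists 1%N, (fun _ => a), (fun _ => b), (fun _ => m), (fun _ => f); split.
  by move=> i.
by rewrite big_ord1.
Qed.

Lemma nondegH S w : Dg S w -> (forall e z, Dg e z -> B z w = 0) -> w = 0.
Proof.
move=> hw H; apply: Hnd => y.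
have [n [a [v [hv ->]]]] := HDdec y.
rewrite (lfS _ (HBl w)); apply: big1 => i _.
by rewrite (Hsym hw (hv i)) (H _ _ (hv i)) mulr0.
Qed.

Definition PhiT (Z : G) (z : g) (m' : M) (c : G) (f' : M -> K) (d : G) : T :=
  tens (rho z m') (f' \o be) + eps Z c *: tens (be m') (rhot eps rho Z d z f').

Lemma brT_pure p q S m f c d m' f' : DM p m -> dual_hom DM q f -> p + q = S ->
  DM c m' -> dual_hom DM d f' ->
  brT (tens m f) (tens m' f') = PhiT S (Dmap (tens m f)) m' c f' d.
Proof. by move=> hm hf <- hm' hf'; rewrite (HbrT hm hf hm' hf'). Qed.

Lemma PhiT_lin S z1 z2 e m c f d : Dg S z1 -> Dg S z2 -> dual_hom DM d f ->
  PhiT S z1 m c f d + e *: PhiT S z2 m c f d = PhiT S (z1 + e *: z2) m c f d.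
Proof.
move=> h1 h2 hf; rewrite /PhiT [z1 + _]addrC Hrhox.
have gf := dh_gd (dh_be hf).
rewrite (linD _ _ (tens_lin gf)) (linZ _ _ (tens_lin gf)).
have -> : rhot eps rho S d (e *: z2 + z1) f =
    (fun n => e * rhot eps rho S d z2 f n + rhot eps rho S d z1 f n).
  apply: functional_extensionality => n; rewrite /rhot Hrhox (hf.1); ring.
rewrite Ht2; last first.
- exact: (dh_gd (dh_rhot h1 hf)).
- exact: (dh_gd (dh_rhot h2 hf)).
by rewrite [e *: tens (rho z2 m) _ + _]addrC combine2.
Qed.


Lemma Dtau p q m f : DM p m -> dual_hom DM q f ->
  Dmap (tens (be m) (f \o be)) = al (Dmap (tens m f)).
Proof.
move=> hm hf; apply/eqP; rewrite -subr_eq0; apply/eqP.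
apply: (nondegH (S := p + q)).
  apply: subB => //; first exact: (Dpure (Hbe_ev hm) (dh_be hf)).
  by apply: Hal_ev; exact: (Dpure hm hf).
move=> e z hz.
rewrite (lfB _ _ (HBl z)) (HDB hz (Hbe_ev hm) (dh_be hf)) -HBal (HDB (Hal_ev hz) hm hf) /=.
by rewrite Hbecomm Hal2 Hbe2 subrr.
Qed.

Lemma Dbr_gen A x m f a2 b2 : Dg A x -> DM a2 m -> dual_hom DM b2 f ->
  Dmap (tens (rho x m) (f \o be)) + eps A a2 *: Dmap (tens (be m) (rhot eps rho A b2 x f))
  = br x (Dmap (tens m f)).
Proof.
move=> hx hm hf.
have h1 : Dg (A + (a2 + b2)) (Dmap (tens (rho x m) (f \o be))).
  by apply: (Dpure (Hrhodeg hx hm) (dh_be hf)); rewrite addrA.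
have h2 : Dg (A + (a2 + b2)) (Dmap (tens (be m) (rhot eps rho A b2 x f))).
  by apply: (Dpure (Hbe_ev hm) (dh_rhot hx hf)); rewrite addrCA.
have hy : Dg (a2 + b2) (Dmap (tens m f)) by exact: (Dpure hm hf).
apply/eqP; rewrite -subr_eq0; apply/eqP; apply: (nondegH (S := A + (a2 + b2))).
  apply: subB => //; [apply: subD => //; exact: subZ | exact: Hbr_deg].
move=> e z hz.
rewrite (lfB _ _ (HBl z)) (lfD _ _ (HBl z)) (lfZ _ _ (HBl z)).
rewrite (HDB hz (Hrhodeg hx hm) (dh_be hf)) (HDB hz (Hbe_ev hm) (dh_rhot hx hf)).
rewrite -Hinvar (HDB (Hbr_deg hz hx) hm hf).
rewrite /rhot /= Hmul.
have := Hrep (be m) (Hal_ev hz) (Hal_ev hx); rewrite Hbe2 !Hal2 => ->.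
rewrite (lfB _ _ hf.1) (lfZ _ _ hf.1) Hbecomm Hal2 Hbecomm.
have hinv : eps a2 A = (eps A a2)^-1.
  have := Hinv A a2; move/(congr1 (fun t => (eps A a2)^-1 * t)).
  by rewrite mulKf ?Hne0 // mulr1.
rewrite !Haddl !Haddr hinv; field; exact: Hne0.
Qed.

Lemma brTD1 u1 u2 v : brT (u1 + u2) v = brT u1 v + brT u2 v.
Proof. exact: (linD _ _ (HbrT2 v)). Qed.
Lemma brTZ1 c u v : brT (c *: u) v = c *: brT u v.
Proof. exact: (linZ _ _ (HbrT2 v)). Qed.
Lemma brTD2 u v1 v2 : brT u (v1 + v2) = brT u v1 + brT u v2.
Proof. exact: (linD _ _ (HbrT1 u)). Qed.
Lemma brTZ2 c u v : brT u (c *: v) = c *: brT u v.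
Proof. exact: (linZ _ _ (HbrT1 u)). Qed.

Lemma tensB1 m m' f : gdual DM f -> tens (m - m') f = tens m f - tens m' f.
Proof. move=> h; exact: (linB _ _ (tens_lin h)). Qed.
Lemma tensZ1 c m f : gdual DM f -> tens (c *: m) f = c *: tens m f.
Proof. move=> h; exact: (linZ _ _ (tens_lin h)). Qed.

Lemma fbb (f : M -> K) : (f \o be) \o be = f.
Proof. by apply: functional_extensionality => n /=; rewrite Hbe2. Qed.

Lemma rhot_be p q z f : Dg p z -> dual_hom DM q f ->
  rhot eps rho p q z f \o be = rhot eps rho p q (al z) (f \o be).
Proof. by move=> hz hf; apply: functional_extensionality => n /=; rewrite Hd2. Qed.

Lemma pure a b a1 b1 a2 b2 a3 b3 m1 f1 m2 f2 m3 f3 :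
  DM a1 m1 -> dual_hom DM b1 f1 -> a1 + b1 = a ->
  DM a2 m2 -> dual_hom DM b2 f2 -> a2 + b2 = b ->
  DM a3 m3 -> dual_hom DM b3 f3 ->
  brT (tau (tens m1 f1)) (brT (tens m2 f2) (tens m3 f3)) =
  brT (brT (tens m1 f1) (tens m2 f2)) (tau (tens m3 f3))
  + eps a b *: brT (tau (tens m2 f2)) (brT (tens m1 f1) (tens m3 f3)).
Proof.
move=> hm1 hf1 ea hm2 hf2 eb hm3 hf3.
have hx : Dg a (Dmap (tens m1 f1)) := Dpure hm1 hf1 ea.
have hy : Dg b (Dmap (tens m2 f2)) := Dpure hm2 hf2 eb.
rewrite (Htau _ (dh_gd hf1)) (Htau _ (dh_gd hf2)) (Htau _ (dh_gd hf3)).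
rewrite (brT_pure hm2 hf2 eb hm3 hf3) (brT_pure hm1 hf1 ea hm3 hf3) (brT_pure hm1 hf1 ea hm2 hf2).
rewrite /PhiT !brTD2 !brTZ2 brTD1 brTZ1.
rewrite (brT_pure (Hbe_ev hm1) (dh_be hf1) ea (Hrhodeg hy hm3) (dh_be hf3)).
rewrite (brT_pure (Hbe_ev hm1) (dh_be hf1) ea (Hbe_ev hm3) (dh_rhot hy hf3)).
rewrite (brT_pure (Hbe_ev hm2) (dh_be hf2) eb (Hrhodeg hx hm3) (dh_be hf3)).
rewrite (brT_pure (Hbe_ev hm2) (dh_be hf2) eb (Hbe_ev hm3) (dh_rhot hx hf3)).
have e1 : a + a2 + b2 = a + b by rewrite -addrA eb.
have e2 : a2 + (a + b2) = a + b by rewrite addrCA eb.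
rewrite (brT_pure (Hrhodeg hx hm2) (dh_be hf2) e1 (Hbe_ev hm3) (dh_be hf3)).
rewrite (brT_pure (Hbe_ev hm2) (dh_rhot hx hf2) e2 (Hbe_ev hm3) (dh_be hf3)).
rewrite PhiT_lin; first last.
- exact: dh_be.
- exact: (Dpure (Hbe_ev hm2) (dh_rhot hx hf2) e2).
- exact: (Dpure (Hrhodeg hx hm2) (dh_be hf2) e1).
rewrite (Dbr_gen hx hm2 hf2) (Dtau hm1 hf1) (Dtau hm2 hf2) /PhiT.
set x := Dmap (tens m1 f1) in hx *; set y := Dmap (tens m2 f2) in hy *.
have gf3 := dh_gd hf3.
rewrite (Hrep _ hx hy) !fbb Hbe2 !Hbecomm (rhot_be hy hf3) (rhot_be hx hf3).
rewrite (tensB1 _ _ gf3) (tensZ1 _ _ gf3).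
have -> : rhot eps rho (a + b) b3 (br x y) (f3 \o be) =
  (fun n => rhot eps rho a (b + b3) (al x) (rhot eps rho b b3 y f3) n
      - eps a b * rhot eps rho b (a + b3) (al y) (rhot eps rho a b3 x f3) n).
  by apply: functional_extensionality => n; rewrite Hd1.
rewrite tensB2; last first.
- exact: (dh_gd (dh_rhot (Hal_ev hy) (dh_rhot hx hf3))).
- exact: (dh_gd (dh_rhot (Hal_ev hx) (dh_rhot hy hf3))).
apply: combine; [exact: Hinv | exact: Haddl | exact: Haddr | exact: Haddr].
Qed.

Definition Eid (a b : G) u v w :=
  brT (tau u) (brT v w) - (brT (brT u v) (tau w) + eps a b *: brT (tau v) (brT u w)).

Lemma brT01 v : brT 0 v = 0.
Proof. exact: (lin0 (HbrT2 v)). Qed.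
Lemma brT02 u : brT u 0 = 0.
Proof. exact: (lin0 (HbrT1 u)). Qed.

Lemma Eid0u a b v w : Eid a b 0 v w = 0.
Proof. by rewrite /Eid (lin0 Htaulin) !(brT01, brT02) ?scaler0 ?addr0 ?subrr. Qed.
Lemma Eid0v a b u w : Eid a b u 0 w = 0.
Proof. by rewrite /Eid (lin0 Htaulin) !(brT01, brT02) ?scaler0 ?addr0 ?subrr. Qed.
Lemma Eid0w a b u v : Eid a b u v 0 = 0.
Proof. by rewrite /Eid (lin0 Htaulin) !(brT01, brT02) ?scaler0 ?addr0 ?subrr. Qed.

Lemma EidDu a b u1 u2 v w : Eid a b (u1 + u2) v w = Eid a b u1 v w + Eid a b u2 v w.
Proof. by rewrite /Eid (linD _ _ Htaulin) !(brTD1, brTD2) scalerDr E_add. Qed.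
Lemma EidDv a b u v1 v2 w : Eid a b u (v1 + v2) w = Eid a b u v1 w + Eid a b u v2 w.
Proof. by rewrite /Eid (linD _ _ Htaulin) !(brTD1, brTD2) scalerDr E_add. Qed.
Lemma EidDw a b u v w1 w2 : Eid a b u v (w1 + w2) = Eid a b u v w1 + Eid a b u v w2.
Proof. by rewrite /Eid (linD _ _ Htaulin) !(brTD1, brTD2) scalerDr E_add. Qed.

Lemma general a b c u v w : tdeg DM tens a u -> tdeg DM tens b v -> tdeg DM tens c w ->
  brT (tau u) (brT v w) = brT (brT u v) (tau w) + eps a b *: brT (tau v) (brT u w).
Proof.
move=> [n1 [a1 [b1 [m1 [f1 [h1 ->]]]]]] [n2 [a2 [b2 [m2 [f2 [h2 ->]]]]]]
       [n3 [a3 [b3 [m3 [f3 [h3 ->]]]]]].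
apply/eqP; rewrite -subr_eq0; apply/eqP.
change (Eid a b (\sum_(i < n1) tens (m1 i) (f1 i)) (\sum_(i < n2) tens (m2 i) (f2 i))
  (\sum_(i < n3) tens (m3 i) (f3 i)) = 0).
apply: (addS0 (f := fun t => Eid a b t _ _)); [exact: Eid0u | move=> *; exact: EidDu|].
move=> i.
apply: (addS0 (f := fun t => Eid a b _ t _)); [exact: Eid0v | move=> *; exact: EidDv|].
move=> j.
apply: (addS0 (f := fun t => Eid a b _ _ t)); [exact: Eid0w | move=> *; exact: EidDw|].
move=> k.
have [hm1 [hf1 ea]] := h1 i; have [hm2 [hf2 eb]] := h2 j; have [hm3 [hf3 _]] := h3 k.
by rewrite /Eid (pure hm1 hf1 ea hm2 hf2 eb hm3 hf3) subrr.
Qed.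

End Main.
Unset Implicit Arguments. Set Strict Implicit.

Theorem mainTheorem14 (K : fieldType) (G : zmodType)
  (g : lmodType K) (Dg : G -> g -> Prop) (br : g -> g -> g) (al : g -> g)
  (eps : G -> G -> K) (B : g -> g -> K)
  (M : lmodType K) (DM : G -> M -> Prop) (rho : g -> M -> M) (be : M -> M)
  (T : lmodType K) (tens : M -> (M -> K) -> T)
  (Dmap : T -> g) (brT : T -> T -> T) (tau : T -> T) :
  [pchar K] =i pred0 ->
  color_hom_lie Dg br al eps ->
  hom_multiplicative br al ->
  quadratic_form Dg br al eps B ->
  representation Dg br al eps DM rho be ->
  (forall x y, (forall m, rho x m = rho y m) -> x = y) ->
  (forall x, al (al x) = x) ->
  (forall m, be (be m) = m) ->
  dual_representation Dg br al eps DM rho be ->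
  is_tensor DM tens ->
  (* the map D *)
  lin Dmap ->
  (forall c t, tdeg DM tens c t -> Dg c (Dmap t)) ->
  (forall a c d x m f, Dg a x -> DM c m -> dual_hom DM d f ->
      B x (Dmap (tens m f)) = eps (a + c) d * f (rho (al x) m)) ->
  (* tau = be (x) be~ *)
  lin tau ->
  (forall m f, gdual DM f -> tau (tens m f) = tens (be m) (f \o be)) ->
  (* the bracket on M (x) M^* *)
  bilin brT ->
  (forall a b c d m f m' f', DM a m -> dual_hom DM b f -> DM c m' -> dual_hom DM d f' ->
      brT (tens m f) (tens m' f') =
        tens (rho (Dmap (tens m f)) m') (f' \o be)
        + eps (a + b) c *: tens (be m') (rhot eps rho (a + b) d (Dmap (tens m f)) f')) ->
  forall a b c u v w, tdeg DM tens a u -> tdeg DM tens b v -> tdeg DM tens c w ->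
    brT (tau u) (brT v w) = brT (brT u v) (tau w) + eps a b *: brT (tau v) (brT u w).
Proof.
move=> _ [[HDsub [HDdec _]] [[Hne0 [Hinv [Haddr Haddl]]] [_ [_ [Hal_ev [Hbr_deg _]]]]]]
  Hmul [HBl [_ [Hnd [Hsym [Hinvar HBal]]]]]
  [_ [Hbelin [Hbe_ev [Hrholin [Hrhox [Hrhodeg [Hrep Hbecomm]]]]]]] _ Hal2 Hbe2
  [Hd1 Hd2] [[Ht1 Ht2] _] HDlin HDdeg HDB Htaulin Htau [HbrT1 HbrT2] HbrT.
move=> a b c u v w hu hv hw.
exact: (general HDsub HDdec Hne0 Hinv Haddr Haddl Hal_ev Hbr_deg Hmul HBl Hnd Hsym
  Hinvar HBal Hbelin Hbe_ev Hrholin Hrhox Hrhodeg Hrep Hbecomm Hal2 Hbe2 Hd1 Hd2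
  Ht1 Ht2 HDdeg HDB Htaulin Htau HbrT1 HbrT2 HbrT hu hv hw).
Qed.
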